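(* Consider the following model. Constants $\alpha,\beta\in[0,1]$ satisfy $0<\alpha+\beta\le 1$ and $\alpha\ge\beta$. An agent has innate opinion $x_0\in[-1,1]$, and at every time $k=0,1,2,\dots$ the platform recommends the same content $u_k=u_0\in[-1,1]$. The agent chooses $\mathrm{clk}_k\in\{0,1\}$, and its opinion evolves by $$x_{k}=\begin{cases}\alpha x_0+\beta x_{k-1}+(1-\alpha-\beta)u_{k-1}, & \mathrm{clk}_{k-1}=1,\\ \frac{\alpha}{\alpha+\beta}x_0+\frac{\beta}{\alpha+\beta}x_{k-1}, & \mathrm{clk}_{k-1}=0.\end{cases}$$ Time is divided into consecutive blocks of length $s\in\mathbb{N}$, block $j\ge 0$ consisting of times $js,\dots,js+s-1$; in block $j$ the agent clicks ($\mathrm{clk}_k=1$) at times $js,\dots,js+T_j-1$ and does not click at times $js+T_j,\dots,js+s-1$, where $T_j\in\{0,1,\dots,s\}$. Let $x_i^{(p)}:=x_{is}$ denote the opinion at the beginning of block $i$ under policy $p$. Write $Z=\alpha+\beta$, $B=\frac{\beta}{\alpha+\beta}$, $\eta=\frac{\alpha}{1-\beta}$ (with the convention $0^0=1$). Let $T_0\in\mathbb{N}$, $T_0\le s$. Then for every $i\ge 1$, $$x_i^{(p)}=(1-\Upsilon_i^{(p)})x_0+\Upsilon_i^{(p)}u_0,$$ where the weights $\Upsilon_i^{(p)}$ are as follows. (1) Fixed policy ($p=1$): $T_j=T_0$ for all $j$. Then $$\Upsilon_i^{(1)}=\frac{1-(B^sZ^{T_0})^i}{1-B^sZ^{T_0}}\,(1-\eta)\,B^{s-T_0}\,(1-\beta^{T_0}).$$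 (2) Decreasing policy ($p=2$): let $\kappa>1$ and $m_D\ge 1$ be an integer such that $T_j=T_0/\kappa^j$ is a positive integer for $0\le j\le m_D-1$ and $T_j=0$ for $j\ge m_D$. Then for $1\le i\le m_D$, $$\Upsilon_i^{(2)}=(1-\eta)\,Z^{-\frac{T_0\kappa^{1-i}}{\kappa-1}}\sum_{j=0}^{i-1}B^{(j+1)s-\frac{T_0}{\kappa^{i-j-1}}}\,Z^{\frac{T_0\kappa^{1-i+j}}{\kappa-1}}\bigl(1-\beta^{\frac{T_0}{\kappa^{i-j-1}}}\bigr),$$ and for $i>m_D$, $\Upsilon_i^{(2)}=B^{(i-m_D)s}\,\Upsilon_{m_D}^{(2)}$. (3) Adaptive decreasing policy ($p=3$): let $\tau\ge 1$ be an integer and $m_{AD}\ge 1$ an integer with $T_0-(m_{AD}-1)\tau\ge 0$, such that $T_j=T_0-j\tau$ for $0\le j\le m_{AD}-1$ and $T_j=T_0-(m_{AD}-1)\tau$ for all $j\ge m_{AD}-1$. Then for $1\le i\le m_{AD}$, $$\Upsilon_i^{(3)}=(1-\eta)\sum_{j=0}^{i-1}B^{(j+1)s-T_0+(i-1-j)\tau}\,Z^{j(T_0-\tau i)+\tau\frac{j^2+j}{2}}\bigl(1-\beta^{T_0-(i-1-j)\tau}\bigr),$$ and for $i>m_{AD}$, writing $T'=T_0-(m_{AD}-1)\tau$, $$\Upsilon_i^{(3)}=\frac{1-(B^sZ^{T'})^{i-m_{AD}}}{1-B^sZ^{T'}}(1-\eta)B^{s-T'}(1-\beta^{T'})+(B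^sZ^{T'})^{i-m_{AD}}\,\Upsilon_{m_{AD}}^{(3)}.$$
   Context: This is a model of the feedback loop between a recommendation platform and an agent who decides at each step whether to consume (click on) the recommended content. The three policies are: fixed (click the first $T_0$ steps of every block), decreasing (the clicking length shrinks by a factor $\kappa$ from block to block until it becomes $0$), and adaptive decreasing (the clicking length is reduced by $\tau$ after a block whenever the opinion at the end of that block satisfies $|x-x_0|\ge x_{\text{drift}}$, and otherwise kept; the hypothesis on $T_j$ in part (3) describes a realization in which reductions happen after blocks $0,\dots,m_{AD}-2$ and never afterwards). Blocks $i\le m_D$ (resp. $i\le m_{AD}$) are called transient and later blocks steady-state. *)

(* Defs.v *)
From HB Require Import structures.
From mathcomp Require Import all_boot all_order all_algebra.
From mathcomp Require Import all_classical all_reals all_analysis.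
Set Implicit Arguments. Unset Strict Implicit. Unset Printing Implicit Defensive.
Import Order.TTheory GRing.Theory Num.Theory.
Local Open Scope ring_scope.

Fixpoint opinion (R : realType) (alpha beta x0 u0 : R) (clk : nat -> bool)
    (k : nat) : R :=
  match k with
  | 0 => x0
  | k'.+1 =>
      if clk k' then alpha * x0 + beta * opinion alpha beta x0 u0 clk k'
                     + (1 - alpha - beta) * u0
      else alpha / (alpha + beta) * x0
           + beta / (alpha + beta) * opinion alpha beta x0 u0 clk k'
  end.

Definition block_clk (s : nat) (T : nat -> nat) (k : nat) : bool :=
  (k %% s < T (k %/ s))%N.

Definition Zc (R : realType) (alpha beta : R) : R := alpha + beta.
Definition Bc (R : realType) (alpha beta : R) : R := beta / (alpha + beta).
Definition etac (R : realType) (alpha beta : R) : R := alpha / (1 - beta).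

Definition Ups_fixed (R : realType) (alpha beta : R) (s T0 i : nat) : R :=
  let Z := Zc alpha beta in let B := Bc alpha beta in
  (1 - (B ^+ s * Z ^+ T0) ^+ i) / (1 - B ^+ s * Z ^+ T0)
  * (1 - etac alpha beta) * B ^+ (s - T0) * (1 - beta ^+ T0).

(* Transient weight of the decreasing policy (real exponents, powR;
   powR 0 0 = 1, matching the convention 0^0 = 1). *)
Definition Ups_dec (R : realType) (alpha beta : R) (s T0 : nat) (kappa : R)
    (i : nat) : R :=
  let Z := Zc alpha beta in let B := Bc alpha beta in
  (1 - etac alpha beta)
  * Z `^ (- (T0%:R * kappa `^ (1 - i%:R) / (kappa - 1)))
  * \sum_(0 <= j < i)
      (B `^ ((j.+1)%:R * s%:R - T0%:R / kappa ^+ (i - j - 1))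
       * Z `^ (T0%:R * kappa `^ (1 - i%:R + j%:R) / (kappa - 1))
       * (1 - beta `^ (T0%:R / kappa ^+ (i - j - 1)))).

Definition Ups_ad (R : realType) (alpha beta : R) (s T0 tau i : nat) : R :=
  let Z := Zc alpha beta in let B := Bc alpha beta in
  (1 - etac alpha beta)
  * \sum_(0 <= j < i)
      (B `^ ((j.+1)%:R * s%:R - T0%:R + (i%:R - 1 - j%:R) * tau%:R)
       * Z `^ (j%:R * (T0%:R - tau%:R * i%:R)
                + tau%:R * (j%:R ^+ 2 + j%:R) / 2)
       * (1 - beta `^ (T0%:R - (i%:R - 1 - j%:R) * tau%:R))).

(* Main.v *)
Require Import Defs.
From HB Require Import structures.
From mathcomp Require Import all_boot all_order all_algebra.
From mathcomp Require Import all_classical all_reals all_analysis.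
From mathcomp Require Import zify ring lra.
Import Order.TTheory GRing.Theory Num.Theory.
Set Implicit Arguments. Unset Strict Implicit.
Local Open Scope ring_scope.

Fixpoint Yv (R : realType) (a b : R) (clk : nat -> bool) (k : nat) : R :=
  match k with
  | 0 => 0
  | k'.+1 => if clk k' then b * Yv a b clk k' + (1 - a - b)
             else b / (a + b) * Yv a b clk k'
  end.

Lemma opinion_Y (R : realType) (a b x0 u0 : R) clk k :
  a + b != 0 ->
  opinion a b x0 u0 clk k = (1 - Yv a b clk k) * x0 + Yv a b clk k * u0.
Proof.
move=> hZ; elim: k => [|k IH] /=; first by ring.
rewrite IH; case: (clk k); first by ring.
by field.
Qed.

Lemma Y_click (R : realType) (a b : R) (clk : nat -> bool) k t :
  (forall m, (m < t)%N -> clk (k + m)%N) ->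
  Yv a b clk (k + t) = b ^+ t * Yv a b clk k + (1 - a - b) * \sum_(0 <= m < t) b ^+ m.
Proof.
elim: t => [|t IH] H.
  by rewrite addn0 big_geq // expr0 mul1r mulr0 addr0.
rewrite addnS /= H // IH; last by move=> m hm; apply: H; lia.
rewrite big_nat_recl // expr0 exprS.
under eq_bigr do rewrite exprS.
rewrite -big_distrr /=; ring.
Qed.

Lemma Y_noclick (R : realType) (a b : R) (clk : nat -> bool) k t :
  (forall m, (m < t)%N -> ~~ clk (k + m)%N) ->
  Yv a b clk (k + t) = (b / (a + b)) ^+ t * Yv a b clk k.
Proof.
elim: t => [|t IH] H.
  by rewrite addn0 expr0 mul1r.
rewrite addnS /= (negbTE (H _ _)) // IH; last by move=> m hm; apply: H; lia.
rewrite exprS; ring.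
Qed.

Lemma Y_block (R : realType) (a b : R) (s : nat) (T : nat -> nat) j :
  (0 < s)%N -> (T j <= s)%N ->
  Yv a b (block_clk s T) (j.+1 * s) =
  (b / (a + b)) ^+ (s - T j) * (b ^+ T j * Yv a b (block_clk s T) (j * s)
     + (1 - a - b) * \sum_(0 <= m < T j) b ^+ m).
Proof.
move=> s0 Ts.
have bc : forall m, (m < s)%N -> block_clk s T (j * s + m) = (m < T j)%N.
  move=> m ms; rewrite /block_clk modnMDl divnMDl // modn_small // divn_small //.
  by rewrite addn0.
have -> : (j.+1 * s = (j * s + T j) + (s - T j))%N by rewrite mulSn; lia.
rewrite Y_noclick; last first.
  by move=> m hm; rewrite -addnA bc; [rewrite -ltnNge; lia | lia].
rewrite Y_click // => m hm; rewrite bc //; lia.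
Qed.

Definition rr (R : realType) (a b : R) (s T : nat) : R := Bc a b ^+ s * Zc a b ^+ T.
Definition cc (R : realType) (a b : R) (s T : nat) : R :=
  (1 - etac a b) * Bc a b ^+ (s - T) * (1 - b ^+ T).

Lemma geom_sum (R : realType) (b : R) T :
  (1 - b) * \sum_(0 <= m < T) b ^+ m = 1 - b ^+ T.
Proof.
have := subrX1 b T; rewrite -(big_mkord xpredT) => e.
have -> : 1 - b ^+ T = - (b ^+ T - 1) by ring.
rewrite e; ring.
Qed.

Lemma BZ_pow (R : realType) (a b : R) (s T : nat) :
  0 <= b -> 0 < a + b -> (0 < s)%N -> (T <= s)%N ->
  Bc a b ^+ (s - T) * b ^+ T = Bc a b ^+ s * Zc a b ^+ T.
Proof.
move=> b0 Z0 s0 Ts; rewrite /Bc /Zc.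
have [->|bn0] := eqVneq b 0.
  rewrite mul0r; case: T Ts => [|T] Ts; first by rewrite subn0 !expr0 mulr1.
  case: s s0 Ts => // s _ _; by rewrite !exprS !mul0r mulr0.
rewrite -{2}(subnK Ts) exprD -mulrA -exprMn divfK //.
by rewrite lt0r_neq0.
Qed.

Lemma block_alg (R : realType) (a b : R) (s T : nat) (Y : R) :
  0 <= b -> b <= a -> 0 < a + b -> a + b <= 1 -> (0 < s)%N -> (T <= s)%N ->
  (b / (a + b)) ^+ (s - T) * (b ^+ T * Y + (1 - a - b) * \sum_(0 <= m < T) b ^+ m)
  = rr a b s T * Y + cc a b s T.
Proof.
move=> b0 ba Z0 Z1 s0 Ts.
have b1 : 1 - b != 0 by apply/lt0r_neq0; lra.
have e : (1 - a - b) * \sum_(0 <= m < T) b ^+ m = (1 - etac a b) * (1 - b ^+ T).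
  rewrite -geom_sum /etac; field; exact: b1.
rewrite mulrDr e /rr /cc -BZ_pow // -/(Bc a b); ring.
Qed.

Lemma Yrec (R : realType) (a b : R) (s : nat) (T : nat -> nat) j :
  0 <= b -> b <= a -> 0 < a + b -> a + b <= 1 -> (0 < s)%N -> (T j <= s)%N ->
  Yv a b (block_clk s T) (j.+1 * s) =
  rr a b s (T j) * Yv a b (block_clk s T) (j * s) + cc a b s (T j).
Proof.
move=> b0 ba Z0 Z1 s0 Ts; rewrite Y_block // block_alg //.
Qed.

Lemma rr_lt1 (R : realType) (a b : R) (s T : nat) :
  0 <= b -> b <= a -> 0 < a + b -> a + b <= 1 -> (0 < s)%N ->
  rr a b s T < 1.
Proof.
move=> b0 ba Z0 Z1 s0.
have B0 : 0 <= Bc a b by rewrite /Bc divr_ge0 // ltW.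
have B1 : Bc a b < 1 by rewrite /Bc ltr_pdivrMr //; lra.
have Bs : Bc a b ^+ s < 1 by rewrite exprn_ilt1 // -lt0n.
have Bs0 : 0 <= Bc a b ^+ s by rewrite exprn_ge0.
have ZT : Zc a b ^+ T <= 1 by rewrite exprn_ile1 // /Zc ltW.
have ZT0 : 0 <= Zc a b ^+ T by rewrite exprn_ge0 // /Zc ltW.
rewrite /rr; nra.
Qed.

Lemma Ups_fixed_rec (R : realType) (a b : R) (s T n : nat) :
  0 <= b -> b <= a -> 0 < a + b -> a + b <= 1 -> (0 < s)%N ->
  Ups_fixed a b s T n.+1 = rr a b s T * Ups_fixed a b s T n + cc a b s T.
Proof.
move=> b0 ba Z0 Z1 s0.
have h := rr_lt1 T b0 ba Z0 Z1 s0.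
have h1 : 1 - rr a b s T != 0 by apply/lt0r_neq0; lra.
move: h1; rewrite /Ups_fixed /rr /cc /= => h1.
rewrite exprS; field; exact: h1.
Qed.

Lemma Ups_fixed0 (R : realType) (a b : R) (s T : nat) : Ups_fixed a b s T 0 = 0.
Proof. by rewrite /Ups_fixed expr0 subrr !mul0r. Qed.

Lemma Ups_dec0 (R : realType) (a b : R) s T0 kappa : Ups_dec a b s T0 kappa 0 = 0.
Proof. by rewrite /Ups_dec big_geq // mulr0. Qed.

Lemma Ups_dec_step (R : realType) (a b : R) (s T0 : nat) (kappa : R) (T : nat -> nat) i :
  0 <= b -> b <= a -> 0 < a + b -> a + b <= 1 -> (0 < s)%N -> 1 < kappa ->
  (forall j, (j <= i)%N -> (T j)%:R = T0%:R / kappa ^+ j /\ (T j <= s)%N) ->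
  Ups_dec a b s T0 kappa i.+1 = rr a b s (T i) * Ups_dec a b s T0 kappa i + cc a b s (T i).
Proof.
move=> b0 ba Z0 Z1 s0 k1 hT.
have B0 : 0 <= Bc a b by rewrite /Bc divr_ge0 // ltW.
have Zn0 : Zc a b != 0 by rewrite /Zc lt0r_neq0.
have kn0 : kappa != 0 by apply/lt0r_neq0; lra.
have k0 : 0 <= kappa by lra.
have k1n0 : kappa - 1 != 0 by apply/lt0r_neq0; lra.
rewrite /Ups_dec big_nat_recl //.
set Z := Zc a b; set B := Bc a b.
rewrite subn0 subn1 /=.
have [hTi hTs] := hT i (leqnn i).
rewrite -hTi.
have -> : (1 - i.+1%:R + 0%:R : R) = - i%:R by rewrite -natr1; ring.
have -> : (1 - i.+1%:R : R) = - i%:R by rewrite -natr1; ring.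
rewrite mul1r -natrB // !powR_mulrn //.
set A := T0%:R * kappa `^ (- i%:R) / (kappa - 1).
have hPZ : Z `^ (- A) * Z `^ A = 1 by rewrite powRN mulVf // powR_eq0 negb_and Zn0.
have hP : Z `^ (- A) = Z ^+ T i * Z `^ (- (T0%:R * kappa `^ (1 - i%:R) / (kappa - 1))).
  rewrite -powR_mulrn; last by rewrite /Z /Zc ltW.
  rewrite -powRD; last by rewrite Zn0 implybT.
  congr (_ `^ _).
  rewrite powRD; last by rewrite kn0 implybT.
  rewrite powRr1 // /A powR_invn // hTi; field.
  by rewrite k1n0 expf_neq0.
have hS : \sum_(0 <= i0 < i)
      B `^ ((i0.+2)%:R * s%:R - T0%:R / kappa ^+ (i.+1 - i0.+1 - 1)) *
      Z `^ (T0%:R * kappa `^ (- i%:R + i0.+1%:R) / (kappa - 1)) *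
      (1 - b `^ (T0%:R / kappa ^+ (i.+1 - i0.+1 - 1)))
   = B ^+ s * \sum_(0 <= j < i)
      B `^ (j.+1%:R * s%:R - T0%:R / kappa ^+ (i - j - 1)) *
      Z `^ (T0%:R * kappa `^ (1 - i%:R + j%:R) / (kappa - 1)) *
      (1 - b `^ (T0%:R / kappa ^+ (i - j - 1))).
  rewrite big_distrr; apply: eq_big_nat => j /andP[_ hj].
  rewrite subSS.
  have -> : (- i%:R + j.+1%:R : R) = 1 - i%:R + j%:R by rewrite -natr1; ring.
  have [hTj hTjs] := hT (i - j - 1)%N ltac:(lia).
  rewrite -hTj.
  have -> : ((j.+2)%:R * s%:R - (T (i - j - 1)%N)%:R : R)
      = s%:R + (j.+1%:R * s%:R - (T (i - j - 1)%N)%:R).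
    rewrite -(natr1 j.+1); ring.
  rewrite powRD; last first.
    apply/implyP => /eqP H; exfalso.
    have : ((T (i - j - 1)%N)%:R <= s%:R :> R) by rewrite ler_nat.
    have : (0 <= j%:R :> R) by [].
    have : (0 < s%:R :> R) by rewrite ltr0n.
    rewrite -natr1 in H; nra.
  by rewrite powR_mulrn // /= -!mulrA.
rewrite hS.
set S := \sum_(0 <= j < i) _.
rewrite mulrDr.
have -> : (1 - etac a b) * Z `^ (- A) * (B ^+ (s - T i) * Z `^ A * (1 - b ^+ T i))
   = (1 - etac a b) * B ^+ (s - T i) * (1 - b ^+ T i) * (Z `^ (- A) * Z `^ A) by ring.
rewrite hPZ mulr1 hP /rr /cc -/B -/Z; ring.
Qed.

Lemma Ups_ad0 (R : realType) (a b : R) s T0 tau : Ups_ad a b s T0 tau 0 = 0.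
Proof. by rewrite /Ups_ad big_geq // mulr0. Qed.

Lemma Ups_ad_step (R : realType) (a b : R) (s T0 tau i : nat) :
  0 <= b -> b <= a -> 0 < a + b -> a + b <= 1 -> (0 < s)%N ->
  (T0 <= s)%N -> (i * tau <= T0)%N ->
  Ups_ad a b s T0 tau i.+1 =
  rr a b s (T0 - i * tau) * Ups_ad a b s T0 tau i + cc a b s (T0 - i * tau).
Proof.
move=> b0 ba Z0 Z1 s0 Ts iT.
have B0 : 0 <= Bc a b by rewrite /Bc divr_ge0 // ltW.
have Zn0 : Zc a b != 0 by rewrite /Zc lt0r_neq0.
have Zg0 : 0 <= Zc a b by rewrite /Zc ltW.
rewrite /Ups_ad big_nat_recl //.
set B := Bc a b; set Z := Zc a b.
have hTi : ((T0 - i*tau)%N%:R : R) = T0%:R - i%:R * tau%:R by rewrite natrB // natrM.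
have -> : ((0.+1)%:R * s%:R - T0%:R + (i.+1%:R - 1 - 0%:R) * tau%:R : R)
    = (s - (T0 - i*tau))%N%:R.
  rewrite natrB; [rewrite hTi -natr1; ring | lia].
have -> : (0%:R * (T0%:R - tau%:R * i.+1%:R) + tau%:R * (0%:R ^+ 2 + 0%:R) / 2 : R) = 0.
  ring.
have -> : (T0%:R - (i.+1%:R - 1 - 0%:R) * tau%:R : R) = (T0 - i*tau)%N%:R.
  by rewrite hTi -natr1; ring.
rewrite powRr0 mulr1 !powR_mulrn //.
set G := (fun j : nat => B `^ ((j.+1)%:R * s%:R - T0%:R + (i%:R - 1 - j%:R) * tau%:R) *
      Z `^ (j%:R * (T0%:R - tau%:R * i%:R) + tau%:R * (j%:R ^+ 2 + j%:R) / 2) *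
      (1 - b `^ (T0%:R - (i%:R - 1 - j%:R) * tau%:R))).
have hS : \sum_(0 <= i0 < i)
      B `^ ((i0.+2)%:R * s%:R - T0%:R + (i.+1%:R - 1 - i0.+1%:R) * tau%:R) *
      Z `^ (i0.+1%:R * (T0%:R - tau%:R * i.+1%:R) +
          tau%:R * (i0.+1%:R ^+ 2 + i0.+1%:R) / 2) *
      (1 - b `^ (T0%:R - (i.+1%:R - 1 - i0.+1%:R) * tau%:R))
    = \sum_(0 <= j < i) (B ^+ s * Z ^+ (T0 - i * tau)) * G j.
  apply: eq_big_nat => j /andP[_ hj].
  rewrite /G.
  have -> : (i.+1%:R - 1 - j.+1%:R : R) = i%:R - 1 - j%:R by rewrite -!natr1; ring.
  have -> : ((j.+2)%:R * s%:R - T0%:R + (i%:R - 1 - j%:R) * tau%:R : R)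
      = s%:R + ((j.+1)%:R * s%:R - T0%:R + (i%:R - 1 - j%:R) * tau%:R).
    rewrite -(natr1 j.+1); ring.
  have -> : (j.+1%:R * (T0%:R - tau%:R * i.+1%:R) + tau%:R * (j.+1%:R ^+ 2 + j.+1%:R) / 2 : R)
      = (T0 - i * tau)%N%:R + (j%:R * (T0%:R - tau%:R * i%:R) + tau%:R * (j%:R ^+ 2 + j%:R) / 2).
    by rewrite hTi -!natr1; field.
  rewrite powRD; last first.
    apply/implyP => /eqP H; exfalso.
    have h1 : (T0%:R <= s%:R :> R) by rewrite ler_nat.
    have h2 : (0 <= j%:R * s%:R :> R) by rewrite mulr_ge0.
    have h3 : (j%:R + 1 <= i%:R :> R) by rewrite natr1 ler_nat.
    have h4 : (0 <= (i%:R - 1 - j%:R) * tau%:R :> R) by rewrite mulr_ge0 //; lra.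
    have h5 : (0 < s%:R :> R) by rewrite ltr0n.
    rewrite -natr1 in H; nra.
  rewrite [Z `^ (_ + _)]powRD; last by rewrite Zn0 implybT.
  rewrite !powR_mulrn //; ring.
rewrite hS -big_distrr /= /rr /cc -/B -/Z; ring.
Qed.

Lemma T_le_s (R : realType) (T0 s : nat) (kappa : R) (Tj j : nat) :
  1 < kappa -> (T0 <= s)%N -> Tj%:R = T0%:R / kappa ^+ j -> (Tj <= s)%N.
Proof.
move=> k1 Ts hT.
have kj : 1 <= kappa ^+ j by rewrite exprn_ege1 // ltW.
have kj0 : 0 < kappa ^+ j by lra.
have : (Tj%:R <= T0%:R :> R).
  rewrite hT ler_pdivrMr //.
  have : (0 <= T0%:R :> R) by [].
  nra.
rewrite ler_nat => h; exact: leq_trans h Ts.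
Qed.

Unset Implicit Arguments.

Theorem proposition1 (R : realType) (alpha beta x0 u0 : R) (s T0 : nat) :
  0 <= alpha <= 1 -> 0 <= beta <= 1 -> 0 < alpha + beta <= 1 ->
  beta <= alpha -> -1 <= x0 <= 1 -> -1 <= u0 <= 1 ->
  (0 < s)%N -> (T0 <= s)%N ->
  (* (1) fixed policy *)
  (forall T : nat -> nat, (forall j, T j = T0) ->
     forall i, (1 <= i)%N ->
       opinion alpha beta x0 u0 (block_clk s T) (i * s)
       = (1 - Ups_fixed alpha beta s T0 i) * x0
         + Ups_fixed alpha beta s T0 i * u0)
  /\
  (* (2) decreasing policy *)
  (forall (kappa : R) (mD : nat) (T : nat -> nat),
     1 < kappa -> (1 <= mD)%N ->
     (forall j, (j < mD)%N -> (0 < T j)%N /\ (T j)%:R = T0%:R / kappa ^+ j) ->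
     (forall j, (mD <= j)%N -> T j = 0%N) ->
     (forall i, (1 <= i <= mD)%N ->
        opinion alpha beta x0 u0 (block_clk s T) (i * s)
        = (1 - Ups_dec alpha beta s T0 kappa i) * x0
          + Ups_dec alpha beta s T0 kappa i * u0)
     /\
     (forall i, (mD < i)%N ->
        let Y := Bc alpha beta ^+ ((i - mD) * s) * Ups_dec alpha beta s T0 kappa mD in
        opinion alpha beta x0 u0 (block_clk s T) (i * s)
        = (1 - Y) * x0 + Y * u0))
  /\
  (* (3) adaptive decreasing policy *)
  (forall (tau mAD : nat) (T : nat -> nat),
     (1 <= tau)%N -> (1 <= mAD)%N -> ((mAD - 1) * tau <= T0)%N ->
     (forall j, (j <= mAD - 1)%N -> T j = (T0 - j * tau)%N) ->
     (forall j, (mAD - 1 <= j)%N -> T j = (T0 - (mAD - 1) * tau)%N) ->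
     (forall i, (1 <= i <= mAD)%N ->
        opinion alpha beta x0 u0 (block_clk s T) (i * s)
        = (1 - Ups_ad alpha beta s T0 tau i) * x0
          + Ups_ad alpha beta s T0 tau i * u0)
     /\
     (forall i, (mAD < i)%N ->
        let Tp := (T0 - (mAD - 1) * tau)%N in
        let Y := Ups_fixed alpha beta s Tp (i - mAD)
                 + (Bc alpha beta ^+ s * Zc alpha beta ^+ Tp) ^+ (i - mAD)
                   * Ups_ad alpha beta s T0 tau mAD in
        opinion alpha beta x0 u0 (block_clk s T) (i * s)
        = (1 - Y) * x0 + Y * u0)).
Proof.
move=> /andP[a0 a1] /andP[b0 b1] /andP[Z0 Z1] ba _ _ s0 Ts.
have Zn0 : alpha + beta != 0 by rewrite lt0r_neq0.
split.
  move=> T HT i _; rewrite opinion_Y //.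
  suff -> : Yv alpha beta (block_clk s T) (i * s) = Ups_fixed alpha beta s T0 i by [].
  elim: i => [|i IH]; first by rewrite Ups_fixed0 mul0n.
  by rewrite Yrec ?HT // IH Ups_fixed_rec.
split.
  move=> kappa mD T k1 mD1 HT HT0.
  have Ytr : forall i, (i <= mD)%N ->
      Yv alpha beta (block_clk s T) (i * s) = Ups_dec alpha beta s T0 kappa i.
    elim=> [|i IH] hi; first by rewrite Ups_dec0 mul0n.
    have [_ hTi] := HT i hi.
    rewrite Yrec //; last exact: T_le_s hTi.
    rewrite IH; last exact: ltnW.
    rewrite (Ups_dec_step (T:=T)) // => j hj.
    have [_ hTj] := HT j (leq_ltn_trans hj hi).
    split => //; exact: T_le_s hTj.
  split.
    move=> i /andP[_ hi]; rewrite opinion_Y // Ytr //.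
  move=> i hi Y; rewrite opinion_Y //.
  suff -> : Yv alpha beta (block_clk s T) (i * s) = Y by [].
  rewrite /Y; have -> : i = (mD + (i - mD))%N by lia.
  rewrite addKn; elim: (i - mD)%N => [|n IH]; first by rewrite addn0 mul0n expr0 mul1r Ytr.
  rewrite addnS Yrec //; last by rewrite HT0 //; lia.
  rewrite HT0; last lia.
  rewrite IH /rr /cc !expr0 subrr !mulr0 addr0 mulr1 mulSn exprD mulrA //.
move=> tau mAD T tau1 mAD1 hT0 HT HTp.
have Ytr : forall i, (i <= mAD)%N ->
    Yv alpha beta (block_clk s T) (i * s) = Ups_ad alpha beta s T0 tau i.
  elim=> [|i IH] hi; first by rewrite Ups_ad0 mul0n.
  have hTi : T i = (T0 - i * tau)%N by apply: HT; lia.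
  rewrite Yrec //; last by rewrite hTi leq_subLR; lia.
  rewrite IH; last exact: ltnW.
  rewrite hTi Ups_ad_step //.
  apply: leq_trans hT0; rewrite leq_mul2r; apply/orP; right; lia.
split.
  move=> i /andP[_ hi]; rewrite opinion_Y // Ytr //.
move=> i hi Tp Y; rewrite opinion_Y //.
suff -> : Yv alpha beta (block_clk s T) (i * s) = Y by [].
rewrite /Y; have -> : i = (mAD + (i - mAD))%N by lia.
rewrite addKn; elim: (i - mAD)%N => [|n IH].
  by rewrite addn0 Ups_fixed0 expr0 mul1r add0r Ytr.
rewrite addnS Yrec //; last by rewrite HTp; lia.
rewrite HTp; last lia.
rewrite IH Ups_fixed_rec // /rr exprS; ring.
Qed.
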